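(* Every bounded monomial polyhedron $\mathscr{U}\subset\mathbb{C}^n$ is contained in the unit polydisc $\mathbb{D}^n$, and its boundary contains the unit torus $\mathbb{T}^n=\{z:|z_j|=1,\ 1\le j\le n\}$.
   Context: A monomial polyhedron defined by $B\in M_n(\mathbb{Q})$ with rows $b^j$ is $\mathscr{U}=\{z\in\mathbb{C}^n: \prod_{k}|z_k|^{b^j_k}<1 \text{ for all } j\}$, where $z$ is excluded if some product is undefined due to division by zero (some $z_k=0$ with $b^j_k<0$); it is assumed to be a nonempty domain. *)

(* Defs.v *)
From HB Require Import structures.
From mathcomp Require Import all_boot all_order all_algebra.
From mathcomp Require Import complex.
From mathcomp Require Import all_classical all_reals all_analysis.
Export Order.TTheory GRing.Theory Num.Theory.
Export numFieldNormedType.Exports.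

Set Implicit Arguments.
Unset Strict Implicit.
Unset Printing Implicit Defensive.

Local Open Scope ring_scope.
Local Open Scope classical_set_scope.

(* The complex numbers over a real closed field R, R[i], viewed as a
   numClosedFieldType; it carries the canonical normed/topological structure
   given by the modulus, and 'rV[Cplx R]_n (= C^n) carries the product
   topology / sup norm. *)
Definition Cplx (R : rcfType) : numClosedFieldType := R[i].

Definition cmod (R : rcfType) (z : Cplx R) : R := ComplexField.Normc.normc z.

Definition boundary (T : topologicalType) (A : set T) : set T :=
  closure A `\` interior A.

(* Monomial polyhedron defined by B in M_n(Q) (rows b^j):
   z is in U iff for every row j, no coordinate z_k with b^j_k < 0 vanishes
   (otherwise the product is undefined and z is excluded) and
   prod_k |z_k|^{b^j_k} < 1.  Note powR 0 b = 0 for b > 0 and 1 for b = 0. *)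
Definition monomial_polyhedron (R : realType) (n : nat) (B : 'M[rat]_n)
  : set 'rV[Cplx R]_n :=
  [set z | forall j : 'I_n,
      (forall k : 'I_n, B j k < 0 -> z ord0 k != 0) /\
      \prod_(k < n) powR (cmod (z ord0 k)) (ratr (B j k)) < 1].

Definition unit_polydisc (R : realType) (n : nat) : set 'rV[Cplx R]_n :=
  [set z | forall k : 'I_n, cmod (z ord0 k) < 1].

Definition unit_torus (R : realType) (n : nat) : set 'rV[Cplx R]_n :=
  [set z | forall k : 'I_n, cmod (z ord0 k) = 1].

Arguments monomial_polyhedron R {n} B.
Arguments unit_polydisc : clear implicits.
Arguments unit_torus : clear implicits.

(* Main.v *)
Set Warnings "-all".
Require Import Defs.
From HB Require Import structures.
From mathcomp Require Import all_boot all_order all_algebra.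
From mathcomp Require Import complex.
From mathcomp Require Import all_classical all_reals all_analysis.
Import Order.TTheory GRing.Theory Num.Theory.
Import numFieldNormedType.Exports.
Local Open Scope ring_scope.
Local Open Scope classical_set_scope.

Section Aux.
Variable R : realType.
Local Notation C := (Cplx R).

Lemma cmodE (z : C) : `|z| = (cmod z)%:C%C.
Proof. by []. Qed.

Lemma cmod_ge0 (z : C) : 0 <= cmod z.
Proof. have := normr_ge0 z; rewrite cmodE. by rewrite (_ : 0 = 0%:C%C) // lecR. Qed.

Lemma cmodM (x y : C) : cmod (x * y) = cmod x * cmod y.
Proof. exact: Normc.normcM. Qed.

Lemma cmod_real (r : R) : cmod (r%:C%C) = `|r|.
Proof. rewrite /cmod /ComplexField.Normc.normc /= expr0n /= addr0. exact: sqrtr_sqr. Qed.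

Lemma cmod_eq0 (z : C) : cmod z = 0 -> z = 0.
Proof. exact: Normc.eq0_normc. Qed.

Lemma cmodB (x y : C) : cmod (x - y) = cmod (y - x).
Proof. by rewrite -opprB /cmod normcN. Qed.

Lemma ballC (x : C) (e : R) y : ball x (e%:C%C) y <-> cmod (x - y) < e.
Proof. rewrite /ball /=. by rewrite cmodE ltcR. Qed.

Lemma powR_expR (a s : R) : 0 < a -> powR a s = expR (s * ln a).
Proof. move=> a0. rewrite /powR. by rewrite gt_eqF. Qed.


Lemma cB (r : R) : ((1 - r)%:C = 1 - r%:C :> Cplx R)%C.
Proof. by rewrite rmorphB rmorph1. Qed.

Lemma cD (r : R) : ((1 + r)%:C = 1 + r%:C :> Cplx R)%C.
Proof. by rewrite rmorphD rmorph1. Qed.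

Lemma cmod0 : cmod (0 : C) = 0.
Proof. exact: Normc.normc0. Qed.

Lemma powR_prod n (a b : 'I_n -> R) (s : R) : (forall k, 0 <= a k) ->
  \prod_(k < n) powR (powR (a k) s) (b k) = powR (\prod_(k < n) powR (a k) (b k)) s.
Proof.
move=> a0.
under eq_bigr do rewrite powRAC.
set L := (X in X = _); set Q := (X in _ = powR X s).
suff [//] : L = powR Q s /\ 0 <= Q.
apply: (big_ind2 (fun x y => x = powR y s /\ 0 <= y)).
- by rewrite powR1.
- move=> x1 x2 y1 y2 [-> h1] [-> h2]; split; last exact: mulr_ge0.
  by rewrite powRM.
- move=> k _; split=> //; exact: powR_ge0.
Qed.
End Aux.

Section Main.
Variables (R : realType) (n : nat) (B : 'M[rat]_n).
Local Notation C := (Cplx R).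
Local Notation U := (monomial_polyhedron R B).

Lemma scaleU (w : 'rV[C]_n) (u : 'I_n -> C) (s : R) :
  U w -> (forall k, w ord0 k != 0) -> 0 < s -> (forall k, cmod (u k) = 1) ->
  U (\row_k (u k * (powR (cmod (w ord0 k)) s)%:C%C)).
Proof.
move=> Uw wn0 s0 u1.
have cv : forall k, cmod ((\row_k (u k * (powR (cmod (w ord0 k)) s)%:C%C)) ord0 k)
    = powR (cmod (w ord0 k)) s.
  by move=> k; rewrite mxE cmodM u1 mul1r cmod_real ger0_norm // powR_ge0.
have wpos : forall k, 0 < cmod (w ord0 k).
  move=> k; rewrite lt_neqAle cmod_ge0 andbT eq_sym; apply/eqP => /cmod_eq0.
  by apply/eqP; exact: wn0.
move=> j; split.
  move=> k _; apply/eqP => /(congr1 (@cmod R)); rewrite cv cmod0.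
  by move/eqP; rewrite gt_eqF // powR_gt0.
under eq_bigr do rewrite cv.
rewrite powR_prod; last by move=> k; exact: cmod_ge0.
have [P0 P1] := Uw j.
rewrite [X in _ < X](_ : 1 = powR 1 s); last by rewrite powR1.
apply: gt0_ltr_powR => //; rewrite ?inE //=; rewrite nnegrE ?ler01 //; apply: prodr_ge0 => k _; exact: powR_ge0.
Qed.


Lemma cpos (e : C) : 0 < e -> e = (cmod e)%:C%C /\ 0 < cmod e.
Proof.
move=> e0; have ee : e = (cmod e)%:C%C by rewrite -cmodE gtr0_norm.
split=> //; move: e0; rewrite {1}ee (_ : 0 = 0%:C%C) // ltcR //.
Qed.

Lemma perturb (z : 'rV[C]_n) : open U -> U z ->
  exists w, [/\ U w, (forall k, w ord0 k != 0) & (forall k, cmod (z ord0 k) < cmod (w ord0 k))].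
Proof.
move=> oU Uz.
have : nbhs z U by apply: open_nbhs_nbhs; split.
move=> /nbhs_ballP [e e0 sub].
have [ee d0] := cpos e e0.
set d := cmod e in ee d0.
set d' := d / 2.
have d'0 : 0 < d' by rewrite divr_gt0.
have d'd : d' < d by rewrite ltr_pdivrMr // ltr_pMr // ltr1n.
pose w := \row_k (if z ord0 k == 0 then d'%:C%C else
                  z ord0 k * (1 + d' / cmod (z ord0 k))%:C%C).
have cw : forall k, cmod (w ord0 k) = cmod (z ord0 k) + d'.
  move=> k; rewrite mxE; case: eqP => [->|zk].
    by rewrite cmod_real cmod0 add0r ger0_norm // ltW.
  have cz : 0 < cmod (z ord0 k).
    rewrite lt_neqAle cmod_ge0 andbT eq_sym; apply/eqP => /cmod_eq0; exact: zk.
  rewrite cmodM cmod_real ger0_norm; last by rewrite addr_ge0 // divr_ge0 // ltW.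
  by rewrite mulrDr mulr1 mulrCA divff ?mulr1 // gt_eqF.
exists w; split.
- apply: sub; rewrite ee; split; first by rewrite (_ : 0 = 0%:C%C) // ltcR.
  move=> i k; rewrite (ord1 i); apply/ballC.
  rewrite mxE; case: eqP => [->|zk].
    by rewrite sub0r /cmod normcN -/(cmod _) cmod_real ger0_norm // ltW.
  rewrite cD mulrDr mulr1 opprD addrA subrr sub0r /cmod normcN -/(cmod _).
  have cz : 0 < cmod (z ord0 k).
    rewrite lt_neqAle cmod_ge0 andbT eq_sym; apply/eqP => /cmod_eq0; exact: zk.
  rewrite cmodM cmod_real ger0_norm; last by rewrite divr_ge0 // ltW.
  by rewrite mulrCA divff ?mulr1 // gt_eqF.
- move=> k; apply/eqP => /(congr1 (@cmod R)); rewrite cw cmod0 => /eqP.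
  by rewrite gt_eqF // ltr_pwDr // cmod_ge0.
- by move=> k; rewrite cw ltrDl.
Qed.


Lemma bound_of_bounded : bounded_set U ->
  exists c : R, 0 < c /\ forall z, U z -> forall k, cmod (z ord0 k) < c.
Proof.
move=> [M0 [M0r HM]].
set c := cmod M0 + 2.
exists c; split; first by rewrite ltr_pwDr // cmod_ge0.
have M0M : M0 < (cmod M0 + 1)%:C%C.
  apply: le_lt_trans (real_ler_norm M0r) _.
  by rewrite cmodE ltcR ltrDl.
move=> z Uz k.
have := HM _ M0M z Uz => /= zM.
have : ball (0 : 'rV[C]_n) ((cmod M0 + 2)%:C%C) z.
  rewrite mx_norm_ball /ball_ /= sub0r normrN; apply: le_lt_trans zM _.
  by rewrite ltcR ltrD2l ltr1n.
case=> _ /(_ ord0 k) /ballC.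
by rewrite mxE sub0r /cmod normcN.
Qed.

Lemma in_disc : open U -> bounded_set U -> U `<=` unit_polydisc R n.
Proof.
move=> oU bU z Uz k.
rewrite ltNge; apply/negP => zk1.
have [w [Uw wn0 zw]] := perturb z oU Uz.
have [c [c0 Hc]] := bound_of_bounded bU.
set a := cmod (w ord0 k).
have a1 : 1 < a by apply: le_lt_trans zk1 (zw k).
have la : 0 < ln a by exact: ln_gt0.
set s := c / ln a.
have s0 : 0 < s by rewrite divr_gt0.
have := Hc _ (@scaleU w (fun=> 1) s Uw wn0 s0 (fun=> Normc.normc1 R)) k.
rewrite mxE mul1r cmod_real ger0_norm ?powR_ge0 // powR_expR ?(lt_trans ltr01) //.
rewrite /s divfK ?gt_eqF //.
apply/negP; rewrite -leNgt.
apply: le_trans (expR_ge1Dx c); by rewrite lerDr.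
Qed.


Lemma torus_bd : (0 < n)%N -> U !=set0 -> open U -> bounded_set U ->
  unit_torus R n `<=` boundary U.
Proof.
move=> n0 [z0 Uz0] oU bU t Tt; split; last first.
  move=> /interior_subset Ut.
  have [_ P1] := Ut (Ordinal n0).
  move: P1; under eq_bigr do rewrite Tt powR1.
  by rewrite big1 // ltxx.

move=> N /nbhs_ballP [e e0 sub].
have [ee d0] := cpos e e0.
set d := cmod e in ee d0.
have [w [Uw wn0 _]] := perturb z0 oU Uz0.
have wpos : forall k, 0 < cmod (w ord0 k).
  move=> k; rewrite lt_neqAle cmod_ge0 andbT eq_sym; apply/eqP => /cmod_eq0.
  by apply/eqP; exact: wn0.
have w1 : forall k, cmod (w ord0 k) < 1 by move=> k; exact: (in_disc oU bU w Uw k).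
set m := \prod_(k < n) cmod (w ord0 k).
have m0 : 0 < m by apply: prodr_gt0 => k _.
have mk : forall k, m <= cmod (w ord0 k).
  move=> k; rewrite /m (bigD1 k) //= ler_piMr ?cmod_ge0 //.
  by apply: prodr_ile1 => i _; rewrite cmod_ge0 ltW.
have m1 : m <= 1 by apply: le_trans (mk (Ordinal n0)) (ltW (w1 _)).
have lm : ln m <= 0 by exact: ln_le0.
set s := d / (1 - ln m).
have lm1 : 0 < 1 - ln m by rewrite subr_gt0 (le_lt_trans lm) ?ltr01.
have s0 : 0 < s by rewrite divr_gt0.
pose v := \row_k (t ord0 k * (powR (cmod (w ord0 k)) s)%:C%C).
have Uv : U v by apply: scaleU => // k; exact: Tt.
exists v; split => //; apply: sub; rewrite ee; split.
  by rewrite (_ : 0 = 0%:C%C) // ltcR.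
move=> i k; rewrite (ord1 i); apply/ballC; rewrite mxE.
set r := powR (cmod (w ord0 k)) s.
have r1 : r <= 1.
  rewrite /r [leRHS](_ : 1 = powR 1 s); last by rewrite powR1.
  by apply: ge0_ler_powR; rewrite ?nnegrE ?cmod_ge0 ?ltW.
have rm : powR m s <= r.
  apply: ge0_ler_powR; [exact: ltW|by rewrite nnegrE ltW|by rewrite nnegrE cmod_ge0|exact: mk].
have -> : t 0 k = t ord0 k by [].
rewrite -{1}(mulr1 (t ord0 k)) -mulrBr -cB cmodM Tt mul1r cmod_real ger0_norm ?subr_ge0 //.
apply: (@le_lt_trans _ _ (1 - powR m s)); first by rewrite lerD2l lerN2.
rewrite powR_expR //.
apply: (@le_lt_trans _ _ (- (s * ln m))).
  by rewrite lerBlDr -lerBlDl opprK addrC [_ + 1]addrC; exact: expR_ge1Dx.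
rewrite /s -mulrN mulrAC ltr_pdivrMr // ltr_pM2l //.
by rewrite [1 - _]addrC ltrDl ltr01.
Qed.

End Main.

Theorem corollary3p2 (R : realType) (n : nat) (B : 'M[rat]_n) :
  (0 < n)%N ->
  (* U is a domain: nonempty, open and connected *)
  monomial_polyhedron R B !=set0 ->
  open (monomial_polyhedron R B) ->
  connected (monomial_polyhedron R B) ->
  (* U is bounded *)
  bounded_set (monomial_polyhedron R B) ->
  monomial_polyhedron R B `<=` unit_polydisc R n /\
  unit_torus R n `<=` boundary (monomial_polyhedron R B).
Proof.
move=> n0 ne oU _ bU; split; first exact: in_disc.
exact: torus_bd.
Qed.
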